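(* Let $N,q\in\mathbb Z$, $Q\in\mathbb Q$ and $i\in\mathbb Z$ with $i\le N$. Then $$z^i\equiv\sum_{k=1}^{N-q}\sum_{j=1}^{k}\binom{-Q}{-i+q+j}\binom{Q}{k-j}z^{q+k}\pmod{O(N,Q,q;z)}.$$
   Context: For $N,q\in\mathbb Z$ and $Q\in\mathbb Q$, $O(N,Q,q;z)$ is the subspace of $\mathbb C[z,z^{-1}]$ spanned by the monomials $z^i$ with $i\ge N+1$ together with the Laurent polynomials $\sum_{i=0}^{N-q-j}\binom Qi z^{i+q+j}$ for $j=0,-1,-2,\dots$ (equivalently $\mathrm{Res}_x\big((1+x)^Qx^{q+j}\sum_{i\le N}z^ix^{-i-1}\big)$). Binomial coefficients $\binom{c}{k}$ with $k<0$ are $0$; empty sums are $0$. *)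

(* Defs.v *)
From HB Require Import structures.
From mathcomp Require Import all_boot all_order all_algebra.
Unset Printing Implicit Defensive.
Import Order.TTheory GRing.Theory Num.Theory.
Local Open Scope ring_scope.

Definition binomQ (c : rat) (k : int) : rat :=
  match k with
  | Posz n => (\prod_(m < n) (c - m%:R)) / (n`!)%:R
  | Negz _ => 0
  end.

(* A Laurent polynomial over R is represented by its (finitely supported)
   coefficient function int -> R; z^i is [mono i]. *)
Definition mono (R : ringType) (i : int) : int -> R :=
  fun n => if n == i then 1 else 0.

(* The generator  sum_{i=0}^{N-q-j} binom(Q,i) z^(i+q+j)  of O(N,Q,q;z),
   as a coefficient function (coefficient of z^n is binom(Q, n-q-j) if
   q+j <= n <= N, and 0 otherwise). *)
Definition genO (R : unitRingType) (N : int) (Q : rat) (q j : int) : int -> R :=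
  fun n => if (q + j <= n) && (n <= N) then ratr (binomQ Q (n - q - j)) else 0.

(* Membership in the R-span O(N,Q,q;z) of the monomials z^i (i >= N+1) and
   the generators genO for j = 0,-1,-2,...: a finite linear combination. *)
Definition inO (R : unitRingType) (N : int) (Q : rat) (q : int) (p : int -> R) : Prop :=
  exists (m : nat) (a b : nat -> R), forall n : int,
    p n = \sum_(k < m) a k * genO R N Q q (- (k%:Z)) n
        + \sum_(k < m) b k * mono R (N + 1 + k%:Z) n.

Definition rhsT4 (R : unitRingType) (N : int) (Q : rat) (q i : int) : int -> R :=
  fun n => \sum_(0 <= k < `|N - q|%N.+1 | (1 <= k)%N && (k%:Z <= N - q))
             \sum_(1 <= j < k.+1)
               ratr (binomQ (- Q) (- i + q + j%:Z) * binomQ Q (k%:Z - j%:Z))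
               * mono R (q + k%:Z) n.

(* Main.v *)
Require Import Defs.
From HB Require Import structures.
From mathcomp Require Import all_boot all_order all_algebra ring zify.
Import Order.TTheory GRing.Theory Num.Theory.
Local Open Scope ring_scope.

Section RatrC0.
Variable R : fieldType.
Hypothesis HR : [pchar R] =i pred0.

Lemma intrR_eq0 (z : int) : (z%:~R == 0 :> R) = (z == 0).
Proof.
have h := (pcharf0P R).1 HR.
case: z => n.
  by rewrite -pmulrn h.
by rewrite NegzE mulrNz oppr_eq0 -pmulrn h oppr_eq0.
Qed.

Lemma ratrB0 : zmod_morphism (@ratr R).
Proof.
have injZtoQ: @injective rat int intr by apply: intr_inj.
have nz_den x: (denq x)%:~R != 0 :> R by rewrite intrR_eq0 denq_eq0.
move=> x y.
apply: (canLR (mulfK (nz_den _))); apply: (mulIf (nz_den x)).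
rewrite mulrAC mulrBl divfK ?nz_den // mulrAC -!rmorphM.
apply: (mulIf (nz_den y)); rewrite mulrAC mulrBl divfK ?nz_den //.
rewrite -!(rmorphM, rmorphB); congr _%:~R; apply: injZtoQ.
rewrite !(rmorphM, rmorphB) /= [_ - _]lock /= -lock !numqE.
by rewrite (mulrAC y) -!mulrBl -mulrA mulrAC !mulrA.
Qed.

Lemma ratrM0 : monoid_morphism (@ratr R).
Proof.
have injZtoQ: @injective rat int intr by apply: intr_inj.
have nz_den x: (denq x)%:~R != 0 :> R by rewrite intrR_eq0 denq_eq0.
split=> [|x y]; first by rewrite /ratr divr1.
rewrite /ratr mulrC mulrAC; apply: canLR (mulKf (nz_den _)) _; rewrite !mulrA.
do 2!apply: canRL (mulfK (nz_den _)) _; rewrite -!rmorphM; congr _%:~R.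
apply: injZtoQ; rewrite !rmorphM [x * y]lock /= !numqE -lock.
by rewrite -!mulrA mulrA mulrCA -!mulrA (mulrCA y).
Qed.

End RatrC0.
Arguments binomQ : simpl never.

Lemma bQ_neg c (k : int) : k < 0 -> binomQ c k = 0.
Proof. by case: k => //; rewrite /binomQ. Qed.

Lemma bQ0 c : binomQ c 0 = 1.
Proof. by rewrite /binomQ /= big_ord0 divr1. Qed.

Lemma bQS c (k : nat) :
  (k.+1)%:R * binomQ c (k.+1)%:Z = (c - k%:R) * binomQ c k%:Z.
Proof.
rewrite /binomQ big_ord_recr /= factS natrM.
have h1 : (k.+1)%:R != 0 :> rat by rewrite pnatr_eq0.
have h2 : (k`!)%:R != 0 :> rat by rewrite pnatr_eq0 -lt0n fact_gt0.
field; by rewrite h2 /= addrC natr1.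
Qed.

Definition fV (Q : rat) (s : nat) : rat :=
  \sum_(a < s.+1) binomQ Q a%:Z * binomQ (- Q) (s - a)%N%:Z.

Lemma fV_rec Q s : (s.+1)%:R * fV Q s.+1 = - (s%:R * fV Q s).
Proof.
rewrite /fV mulr_sumr.
transitivity (\sum_(a < s.+2) ((a%:R * binomQ Q a%:Z) * binomQ (- Q) (s.+1 - a)%N%:Z
   + binomQ Q a%:Z * ((s.+1 - a)%N%:R * binomQ (- Q) (s.+1 - a)%N%:Z))).
  apply: eq_bigr => a _.
  have ha : (a <= s.+1)%N by rewrite -ltnS.
  rewrite -{1}(subnKC ha) natrD; ring.
rewrite big_split /=.
rewrite [X in X + _]big_ord_recl [X in _ + X]big_ord_recr /= !mul0r add0r subnn mul0r mulr0 addr0.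
under eq_bigr => a _ do rewrite /bump /= add1n subSS bQS.
under [X in _ + X]eq_bigr => a _ do
  rewrite subSn ?(leq_ord a) // bQS.
rewrite -big_split /= mulr_sumr -sumrN.
apply: eq_bigr => a _.
rewrite /=.
have ha : (a <= s)%N by rewrite -ltnS.
rewrite natrB //.
ring.
Qed.

Lemma fV0 Q : fV Q 0 = 1.
Proof. by rewrite /fV big_ord1 /= !bQ0 mulr1. Qed.

Lemma fVS Q s : fV Q s.+1 = 0.
Proof.
elim: s => [|s IH].
  have := fV_rec Q 0; rewrite mul0r oppr0 mul1r //.
have := fV_rec Q s.+1; rewrite IH mulr0 oppr0 => /eqP.
by rewrite mulf_eq0 pnatr_eq0 /= => /eqP.
Qed.

Lemma window Q (s : int) (p M : nat) : p%:Z + s < M%:Z ->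
  \sum_(t < M) binomQ (- Q) (t%:Z - p%:Z) * binomQ Q (s - (t%:Z - p%:Z)) = (s == 0)%:R.
Proof.
case: s => [s|s] hM; last first.
  rewrite big1 // => t _.
  have [ht|ht] := ltP (t%:Z - p%:Z) 0.
    by rewrite bQ_neg // mul0r.
  by rewrite (bQ_neg Q) ?mulr0 //; lia.
rewrite -(big_mkord xpredT (fun t : nat => binomQ (- Q) (t%:Z - p%:Z) * binomQ Q (s%:Z - (t%:Z - p%:Z)))).
have h1 : (p <= p + s.+1)%N by lia.
have h2 : (p + s.+1 <= M)%N by lia.
have h0 : (p <= M)%N by lia.
rewrite (big_cat_nat (leq0n p) h0) /= (big_cat_nat h1 h2) /=.
rewrite big1_seq ?add0r; last first.
  move=> t /andP [_]; rewrite mem_index_iota => /andP [_ ht].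
  by rewrite bQ_neg ?mul0r //; lia.
rewrite [X in _ + X]big1_seq ?addr0; last first.
  move=> t /andP [_]; rewrite mem_index_iota => /andP [ht _].
  by rewrite (bQ_neg Q) ?mulr0 //; lia.
rewrite -{1}[p]add0n big_addn addKn big_mkord.
have := fVS (- Q); have := fV0 (- Q); rewrite /fV opprK.
case: s {h1 h2 hM} => [|s] H0 HS.
  rewrite big_ord1 /= -H0 big_ord1 /=.
  by congr (_ * _); congr binomQ; lia.
rewrite [RHS](_ : _ = 0) // -[RHS](HS s); apply: eq_bigr => t _.
by congr (_ * _); congr binomQ; have := ltn_ord t; lia.
Qed.

Lemma negpos Q (u d : int) (K : nat) : u <= K%:Z ->
  \sum_(k < K.+1) binomQ (- Q) (u - k%:Z) * binomQ Q (d + k%:Z)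
  + \sum_(j < `|d|%N) binomQ (- Q) (u + (j.+1)%:Z) * binomQ Q (d - (j.+1)%:Z)
  = (d + u == 0)%:R.
Proof.
move=> huK.
have [p hp] : exists p : nat, p%:Z = K%:Z - u.
  by exists `|K%:Z - u|%N; rewrite gez0_abs // subr_ge0.
have hd : d <= `|d|%N%:Z by lia.
rewrite -(window Q (d + u) p (K.+1 + `|d|)); last by lia.
rewrite big_split_ord /=.
congr (_ + _).
  rewrite (reindex_inj rev_ord_inj) /=.
  apply: eq_bigr => k _; rewrite /=.
  have := ltn_ord k => hk.
  by congr (_ * _); congr binomQ; lia.
apply: eq_bigr => j _; rewrite /=.
by congr (_ * _); congr binomQ; lia.
Qed.

Section Main.
Variable R : fieldType.
Hypothesis HR : [pchar R] =i pred0.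

Let rB (x y : rat) : @ratr R (x - y) = ratr x - ratr y := ratrB0 R HR x y.
Let rM (x y : rat) : @ratr R (x * y) = ratr x * ratr y := (ratrM0 R HR).2 x y.
Let r0 : @ratr R 0 = 0.
Proof. by rewrite -(subr0 0) rB subrr. Qed.
Let rN (x : rat) : @ratr R (- x) = - ratr x.
Proof. by rewrite -sub0r rB r0 sub0r. Qed.
Let rD (x y : rat) : @ratr R (x + y) = ratr x + ratr y.
Proof. by have := rB x (- y); rewrite opprK rN opprK. Qed.
Let rS (I : Type) (r : seq I) (P : pred I) (F : I -> rat) :
  @ratr R (\sum_(i <- r | P i) F i) = \sum_(i <- r | P i) ratr (F i).
Proof. exact: (big_morph _ rD r0). Qed.

Lemma rhs_eq (N : int) (Q : rat) (q i n : int) : n <= N ->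
  rhsT4 R N Q q i n = ratr (\sum_(j < `|n - q|%N)
     binomQ (- Q) ((q - i) + (j.+1)%:Z) * binomQ Q ((n - q) - (j.+1)%:Z)).
Proof.
move=> hn; rewrite /rhsT4.
have [hd|hd] := ltrP 0 (n - q).
  rewrite big_mkord.
  have hk : (`|n - q|%N < `|N - q|%N.+1)%N by lia.
  rewrite (bigD1 (Ordinal hk)) /=; last by apply/andP; split; lia.
  rewrite [X in _ + X]big1 ?addr0; last first.
    move=> k /andP [_ /eqP hk'].
    rewrite big1 // => j _; rewrite /mono.
    have -> : (n == q + (nat_of_ord k)%:Z) = false.
      apply/negbTE/eqP => E; apply: hk'; apply: val_inj => /=; lia.
    by rewrite mulr0.
  rewrite rS big_add1 /= big_mkord; apply: eq_bigr => j _.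
  rewrite /mono.
  have -> : (n == q + `|n - q|%N%:Z) = true by apply/eqP; lia.
  rewrite mulr1; congr ratr; congr (_ * _); congr binomQ; lia.
rewrite big1.
  have {}hd : (n - q <= 0 :> int) := hd.
  rewrite big1 ?r0 // => j _; rewrite (bQ_neg Q) ?mulr0 //; lia.
move=> k /andP [hk1 _]; rewrite big1 // => j _.
rewrite /mono.
have -> : (n == q + k%:Z) = false by apply/negbTE/eqP; lia.
by rewrite mulr0.
Qed.

Lemma main_sec (N q : int) (Q : rat) (i : int) (hi : i <= N) :
  inO R N Q q (fun n => mono R i n - rhsT4 R N Q q i n).
Proof.
exists (`|q - i|%N).+1, (fun k => ratr (binomQ (- Q) ((q - i) - k%:Z))), (fun _ => 0).
move=> n; rewrite [X in _ = _ + X]big1 ?addr0 => [|k _]; last by rewrite mul0r.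
have [hn|hn] := lerP n N.
  have {}hn : n <= N :> int := hn.
  have hg : forall k : nat, genO R N Q q (- k%:Z) n = ratr (binomQ Q ((n - q) + k%:Z)).
    move=> k; rewrite /genO hn andbT; case: ifP => h.
      by congr ratr; congr binomQ; lia.
    by rewrite bQ_neg ?r0 //; move/negbT: h; lia.
  under eq_bigr => k _ do rewrite hg -rM.
  rewrite -rS rhs_eq //.
  have hK : q - i <= `|q - i|%N%:Z by lia.
  move: (@negpos Q (q - i) (n - q) _ hK).
  set A := \sum_(k < _) _; set B := \sum_(j < _) _ => E.
  rewrite -(addrK B A) E rB.
  congr (_ - _).
  rewrite (_ : (n - q + (q - i) == 0) = (n == i)); last first.
    by apply/idP/idP => /eqP H; apply/eqP; lia.
  rewrite /mono ratr_nat; by case: (n == i).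
have {}hn : N < n :> int := hn.
rewrite /mono (_ : (n == i) = false); last by apply/negbTE/eqP; lia.
rewrite big1; last first.
  move=> k _; rewrite /genO (_ : (n <= N) = false) ?andbF ?mulr0 //.
  by apply/negbTE; lia.
rewrite /rhsT4 big1 ?subrr // => k /andP [_ hk].
rewrite big1 // => j _.
by rewrite /mono (_ : (n == q + k%:Z) = false) ?mulr0 //; apply/negbTE/eqP; lia.
Qed.
End Main.

Theorem mainTheorem4 (R : fieldType) (HR : [pchar R] =i pred0)
    (N q : int) (Q : rat) (i : int) (hi : i <= N) :
  inO R N Q q (fun n => mono R i n - rhsT4 R N Q q i n).
Proof. exact: main_sec. Qed.
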